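(* Let $d$ be odd and let $\sigma_\triangle$ be a sign pattern of length $d+1$ with which the pair $(2,1)$ is compatible. For a polynomial realizing $(\sigma_\triangle,(2,1))$ denote its real roots by $-\beta<0<\alpha_1<\alpha_2$. (3) If all monomials of odd degree have positive sign in $\sigma_\triangle$, then there exist polynomials realizing $(\sigma_\triangle,(2,1))$, and every such polynomial satisfies $\beta<\alpha_1<\alpha_2$. (4) If all monomials of even degree have positive sign in $\sigma_\triangle$, then there exist polynomials realizing $(\sigma_\triangle,(2,1))$, and every such polynomial satisfies $\alpha_1<\alpha_2<\beta$.
   Context: A sign pattern of length $d+1$ is a sequence of $d+1$ symbols $+$/$-$ beginning with $+$; a monic polynomial $x^d+\sum_{j<d}a_jx^j$ with all $a_j\neq0$ defines the sign pattern $(+,\operatorname{sign}(a_{d-1}),\ldots,\operatorname{sign}(a_0))$, and the sign of the monomial $x^j$ in the pattern is the entry corresponding to $a_j$. For a sign pattern with $c$ sign changes and $p$ sign preservations ($c+p=d$), a pair $(pos,neg)$ is compatible with it if $pos\le c$, $c-pos$ even, $neg\le p$, $p-neg$ even. A monic polynomial realizes the couple $(\sigma,(pos,neg))$ if it has all coefficients non-zero, defines $\sigma$, has exactly $pos$ positive and $neg$ negative real roots, all simple, and no other real roots. *)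

(* Defs.v *)
From mathcomp Require Import all_boot all_order all_algebra.
From mathcomp Require Import reals.
Set Implicit Arguments. Unset Strict Implicit. Unset Printing Implicit Defensive.
Import Order.TTheory GRing.Theory Num.Theory.
Local Open Scope ring_scope.

(* A sign pattern is a seq bool (true = '+', false = '-'), listed as
   (sign of x^d, sign of a_{d-1}, ..., sign of a_0). *)
Definition sign_pattern (d : nat) (s : seq bool) : bool :=
  (size s == d.+1) && nth false s 0.

Definition sign_changes (s : seq bool) : nat :=
  (\sum_(i < (size s).-1) (nth false s i != nth false s i.+1))%N.

Definition sign_preservations (s : seq bool) : nat :=
  ((size s).-1 - sign_changes s)%N.

Definition compatible (s : seq bool) (pos neg : nat) : bool :=
  [&& (pos <= sign_changes s)%N, ~~ odd (sign_changes s - pos),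
      (neg <= sign_preservations s)%N & ~~ odd (sign_preservations s - neg)].

Definition monomial_sign (s : seq bool) (j : nat) : bool :=
  nth false s ((size s).-1 - j).

Definition defines_pattern (R : realType) (P : {poly R}) (s : seq bool) : Prop :=
  [/\ P \is monic, size P = size s,
      forall j, (j < size s)%N -> P`_j != 0
    & forall j, (j < size s)%N -> (0 < P`_j) = monomial_sign s j].

Definition realizes (R : realType) (P : {poly R}) (s : seq bool) (pos neg : nat) : Prop :=
  [/\ defines_pattern P s,
      exists rs : seq R, [/\ uniq rs, size rs = pos &
                           forall x, x \in rs <-> (0 < x /\ root P x)],
      exists rs : seq R, [/\ uniq rs, size rs = neg &
                           forall x, x \in rs <-> (x < 0 /\ root P x)]
    & forall x, root P x -> ~~ root P^`() x].

(* Main.v *)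
Require Import Defs.
From mathcomp Require Import all_boot all_order all_algebra.
From mathcomp Require Import reals.
From mathcomp Require Import boolp classical_sets topology normedtype derive.
From mathcomp Require Import polyrcf.
From mathcomp Require Import ring lra.
Import Order.TTheory GRing.Theory Num.Theory.
Import numFieldNormedType.Exports.
Local Open Scope classical_set_scope.
Local Open Scope ring_scope.

Section S.
Variable R : realType.

Definition T (m : nat) (Q : {poly R}) := 'X * Q^`() - m%:R *: Q.

Lemma hornerT m Q x : (T m Q).[x] = x * Q^`().[x] - m%:R * Q.[x].
Proof. by rewrite /T !hornerE. Qed.

Lemma coef_T m Q i : (T m Q)`_i = (i%:R - m%:R) * Q`_i.
Proof.
rewrite /T coefB coefXM coefZ; case: i => [|i] /=; first by rewrite sub0r mulrBl mul0r sub0r.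
by rewrite coef_deriv mulrBl; congr (_ - _); rewrite mulr_natl.
Qed.

Lemma quot_incr (Q : {poly R}) (m : nat) (a b : R) : 0 < a -> a < b ->
  (forall x, a < x -> x < b -> 0 < (T m Q).[x]) ->
  Q.[a] / a ^+ m < Q.[b] / b ^+ m.
Proof.
move=> a0 ab hT.
pose g := fun x : R => (('X^m : {poly R}).[x])^-1.
have Xn0 : forall x : R, 0 < x -> ('X^m : {poly R}).[x] != 0.
  by move=> x x0; rewrite hornerXn expf_neq0 // gt_eqF.
have dg : forall x : R, 0 < x -> is_derive x 1 g (- (('X^m : {poly R}).[x]) ^- 2 *: ('X^m : {poly R})^`().[x]).
  move=> x x0; apply: DeriveDef.
    by apply: derivableV; [exact: Xn0|exact: derivable_horner].
  rewrite (@deriveV _ _ (horner ('X^m : {poly R}))); [|exact: Xn0|exact: derivable_horner].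
  by rewrite derive_val.
have df : forall x : R, 0 < x -> is_derive x 1 (fun y : R => Q.[y] * g y) (Q.[x] *: (- (('X^m : {poly R}).[x]) ^- 2 *: ('X^m : {poly R})^`().[x]) + g x *: Q^`().[x]).
  move=> x x0; exact: (@is_deriveM _ _ (horner Q) g x 1 _ _ (is_derive_poly Q x) (dg x x0)).
have a'0 : forall x, x \in `[a, b] -> 0 < x.
  by move=> x; rewrite in_itv /= => /andP[ax _]; exact: lt_le_trans ax.
have cont : {within `[a, b], continuous (fun y : R => Q.[y] * g y)}.
  apply: derivable_within_continuous => x hx.
  by case: (df x (a'0 x hx)).
have [c cab] := MVT ab (fun x hx => df x (a'0 x (subset_itv_oo_cc hx))) cont.
have c0 : 0 < c by apply: a'0; exact: subset_itv_oo_cc.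
have [ac cb] : a < c /\ c < b by move: cab; rewrite in_itv /= => /andP[].
have hTc := hT c ac cb.
rewrite /g !hornerXn => E.
rewrite -subr_gt0 E; apply: mulr_gt0; last by rewrite subr_gt0.
move: hTc; rewrite hornerT derivXn hornerMn hornerXn.
destruct m as [|n] => /=.
  rewrite expr0 invr1 mulr0n !scaler0 add0r scale1r mul0r subr0 => h.
  by rewrite -(pmulr_rgt0 _ c0).
move=> h.
have -> : Q.[c] *: (- (c ^+ n.+1) ^- 2 *: (c ^+ n *+ n.+1)) + (c ^+ n.+1)^-1 *: Q^`().[c]
  = (c * Q^`().[c] - n.+1%:R * Q.[c]) / (c ^+ n.+2).
  rewrite /GRing.scale /= -mulr_natr !exprS; field.
  by rewrite expf_neq0 // gt_eqF.
by apply: divr_gt0 => //; exact: exprn_gt0.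
Qed.


Lemma hornerTN m Q x : (T m (- Q)).[x] = - (T m Q).[x].
Proof. rewrite !hornerT derivN !hornerN; ring. Qed.

Lemma quot_decr (Q : {poly R}) (m : nat) (a b : R) : 0 < a -> a < b ->
  (forall x, a < x -> x < b -> (T m Q).[x] < 0) ->
  Q.[b] / b ^+ m < Q.[a] / a ^+ m.
Proof.
move=> a0 ab h; have := @quot_incr (- Q) m a b a0 ab.
rewrite !hornerN !mulNr ltrN2; apply=> x ax xb.
by rewrite hornerTN oppr_gt0; apply: h.
Qed.

Lemma far_pos (P : {poly R}) (c : R) : 0 < lead_coef P ->
  exists x, c < x /\ 0 < P.[x].
Proof.
move=> lc; have [n hn] := poly_pinfty_gt_lc lc.
exists (Num.max n (c + 1)); split.
  by rewrite lt_max ltrDl ltr01 orbT.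
by apply: lt_le_trans lc _; apply: hn; rewrite le_max lexx.
Qed.

Lemma comp_lead (P : {poly R}) : lead_coef P = 1 -> odd (size P).-1 ->
  lead_coef (- (P \Po - 'X)) = 1.
Proof.
move=> lc od; rewrite lead_coefN lead_coef_comp ?size_polyN ?size_polyX //.
by rewrite lead_coefN lead_coefX lc mul1r -signr_odd od expr1 opprK.
Qed.

Lemma far_neg (P : {poly R}) (c : R) : lead_coef P = 1 -> odd (size P).-1 ->
  exists y, y < c /\ P.[y] < 0.
Proof.
move=> lc od.
have lc' : 0 < lead_coef (- (P \Po - 'X)) by rewrite comp_lead // ltr01.
have [x [cx px]] := @far_pos (- (P \Po - 'X)) (- c) lc'.
exists (- x); split; first by rewrite ltrNl.
by move: px; rewrite hornerN horner_comp hornerN hornerX oppr_gt0.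
Qed.

Lemma hornerTU m P y : (T m (P \Po - 'X)).[y] = (T m P).[- y].
Proof.
rewrite !hornerT deriv_comp derivN derivX hornerM !horner_comp !hornerN hornerX hornerC.
ring.
Qed.

Lemma count (P : {poly R}) (k m : nat) :
  lead_coef P = 1 -> odd (size P).-1 -> 0 < P.[0] -> P.[1] < 0 ->
  (forall x, 0 < x -> 0 < (T k.+1 (T k P)).[x]) ->
  (forall y, 0 < y -> (T m P).[- y] < 0) ->
  exists r1 r2 b, [/\ 0 < r1, r1 < r2, 0 < b, root P r1 &
   [/\ root P r2, root P (- b),
   (forall x, root P x -> [\/ x = r1, x = r2 | x = - b]) &
   (forall x, root P x -> ~~ root P^`() x)]].
Proof.
move=> lc od P0 P1 hH hU.
set G := T k P.
have Gi : forall s t, 0 < s -> s < t -> 0 <= G.[s] -> 0 < G.[t].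
  move=> s t s0 st Gs.
  have := @quot_incr G k.+1 s t s0 st (fun x sx _ => hH x (lt_trans s0 sx)).
  have t0 : 0 < t by apply: lt_trans st.
  move=> h; have := le_lt_trans (divr_ge0 Gs (ltW (exprn_gt0 k.+1 s0))) h.
  by rewrite pmulr_lgt0 // invr_gt0 exprn_gt0.
have Gii : forall s t, 0 < s -> s < t -> G.[t] <= 0 -> G.[s] < 0.
  move=> s t s0 st Gt; rewrite ltNge; apply/negP => Gs.
  by have := Gi s t s0 st Gs; rewrite ltNge Gt.
have root0 : forall x, root P x -> x != 0.
  by move=> x rx; apply: contraTneq P0 => x0; move: rx; rewrite x0 => /eqP ->; rewrite ltxx.
have two : forall x y z, 0 < x -> x < y -> y < z -> root P x -> root P y -> root P z -> False.
  move=> x y z x0 xy yz /eqP rx /eqP ry /eqP rz.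
  have y0 : 0 < y by apply: lt_trans xy.
  case: (lerP 0 G.[y]) => Gy.
    have := @quot_incr P k y z y0 yz (fun t yt _ => Gi y t y0 yt Gy).
    by rewrite ry rz !mul0r ltxx.
  have := @quot_decr P k x y x0 xy (fun t xt ty => Gii t y (lt_trans x0 xt) ty (ltW Gy)).
  by rewrite rx ry !mul0r ltxx.
set U := P \Po - 'X.
have hUE : forall y, U.[y] = P.[- y] by move=> y; rewrite horner_comp hornerN hornerX.
have negu : forall y z, 0 < y -> y < z -> root P (- y) -> root P (- z) -> False.
  move=> y z y0 yz /eqP ry /eqP rz.
  have hT : forall t, y < t -> t < z -> (T m U).[t] < 0.
    by move=> t yt _; rewrite hornerTU; apply: hU; apply: lt_trans yt.
  have := @quot_decr U m y z y0 yz hT.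
  by rewrite !hUE ry rz !mul0r ltxx.
have h01 : P.[0] * P.[1] < 0 by rewrite pmulr_rlt0.
have [r1 r1i rr1] := @poly_ivtoo _ P 0 1 ler01 h01.
have lc0 : 0 < lead_coef P by rewrite lc ltr01.
have [x2 [x21 px2]] := far_pos P 1 lc0.
have h12 : P.[1] * P.[x2] < 0 by rewrite nmulr_rlt0.
have [r2 r2i rr2] := @poly_ivtoo _ P 1 x2 (ltW x21) h12.
have [y3 [y30 py3]] := far_neg P 0 lc od.
have h30 : P.[y3] * P.[0] < 0 by rewrite nmulr_rlt0.
have [z z3 rz] := @poly_ivtoo _ P y3 0 (ltW y30) h30.
move: r1i r2i z3; rewrite !in_itv /= => /andP[r10 r11] /andP[r21 r22] /andP[_ z0].
have r12 : r1 < r2 by apply: lt_trans r21.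
exists r1, r2, (- z); split => //; first by rewrite oppr_gt0.
split => //; first by rewrite opprK.
- move=> x rx; have := root0 x rx; rewrite neq_lt => /orP[x0|x0].
    apply: Or33; rewrite -[x]opprK; congr (- _).
    case: (ltgtP (- x) (- z)) => // h.
      by exfalso; apply: (negu (- x) (- z)); rewrite ?opprK // oppr_gt0.
    by exfalso; apply: (negu (- z) (- x)); rewrite ?opprK // oppr_gt0.
  case: (ltgtP x r1) => [xr1|r1x|->]; last by apply: Or31.
    by exfalso; apply: (two x r1 r2).
  case: (ltgtP x r2) => [xr2|r2x|->]; last by apply: Or32.
    by exfalso; apply: (two r1 x r2).
  by exfalso; apply: (two r1 r2 x).
- move=> x rx; apply/negP => /eqP dx.
  have Gx : G.[x] = 0 by rewrite /G hornerT dx (eqP rx) !mulr0 subrr.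
  have := root0 x rx; rewrite neq_lt => /orP[x0|x0].
    have := hU (- x); rewrite oppr_gt0 opprK => /(_ x0).
    by rewrite hornerT dx (eqP rx) !mulr0 subrr ltxx.
  case: (ltgtP x 1) => [x1|x1|x1].
  + have Gx0 : 0 <= G.[x] by rewrite Gx.
    have := @quot_incr P k x 1 x0 x1 (fun t xt _ => Gi x t x0 xt Gx0).
    rewrite (eqP rx) mul0r expr1n invr1 mulr1 => h.
    by have := lt_trans h P1; rewrite ltxx.
  + have Gx0 : G.[x] <= 0 by rewrite Gx.
    have := @quot_decr P k 1 x ltr01 x1 (fun t t1 tx => Gii t x (lt_trans ltr01 t1) tx Gx0).
    rewrite (eqP rx) mul0r expr1n invr1 mulr1 => h.
    by have := lt_trans h P1; rewrite ltxx.
  + by move: P1; rewrite -x1 (eqP rx) ltxx.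
Qed.


Lemma expr_between (x : R) a j b : 0 < x -> (a <= j <= b)%N -> x ^+ j <= x ^+ a + x ^+ b.
Proof.
move=> x0 /andP[aj jb]; case: (lerP x 1) => x1.
  apply: le_trans (ler_wiXn2l (ltW x0) x1 aj) _.
  by rewrite lerDl exprn_ge0 // ltW.
apply: le_trans (ler_weXn2l (ltW x1) jb) _.
by rewrite lerDr exprn_ge0 // ltW.
Qed.

Lemma dom (n a b : nat) (t : nat -> R) (e x : R) : (a < b < n)%N -> 0 < x -> 0 <= e ->
  1 <= t a -> 1 <= t b -> n%:R * e <= 1 / 2 ->
  (forall j, (j < n)%N -> j != a -> j != b -> 0 <= t j \/ ((a < j < b)%N /\ - e <= t j)) ->
  0 < \sum_(j < n) t j * x ^+ j.
Proof.
move=> /andP[ab bn] x0 e0 ta tb ne h.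
have an : (a < n)%N by apply: ltn_trans bn.
set A := x ^+ a; set B := x ^+ b.
have A0 : 0 < A by rewrite exprn_gt0.
have B0 : 0 < B by rewrite exprn_gt0.
rewrite (bigD1 (Ordinal an)) //= (bigD1 (Ordinal bn)) /=; last first.
  by rewrite -val_eqE /= gtn_eqF.
set S := \sum_(_ < n | _) _.
have hS : n%:R * (- e * (A + B)) <= S.
  rewrite /S big_mkcond /=.
  have -> : n%:R * (- e * (A + B)) = \sum_(j < n) (- e * (A + B)).
    by rewrite sumr_const card_ord mulr_natl.
  apply: ler_sum => j _.
  have c0 : - e * (A + B) <= 0 by rewrite mulNr oppr_le0 mulr_ge0 // addr_ge0 // ltW.
  case: ifP => // /andP[ja jb]. have ja' : (j : nat) != a by move: ja; rewrite -val_eqE.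
  have jb' : (j : nat) != b by move: jb; rewrite -val_eqE.
  have [tj|[/andP[aj jbb] tj]] := h j (ltn_ord j) ja' jb'.
    apply: le_trans c0 _; apply: mulr_ge0 => //; apply: exprn_ge0; exact: ltW.
  have ajb : (a <= j <= b)%N by rewrite (ltnW aj) (ltnW jbb).
  have xj := @expr_between x a j b x0 ajb.
  have xj0 : 0 <= x ^+ j by apply: exprn_ge0; exact: ltW.
  have h1 : - e * (A + B) <= - e * x ^+ j.
    by apply: ler_wnM2l => //; rewrite oppr_le0.
  apply: le_trans h1 _.
  by apply: ler_wpM2r.
have ne' : 0 <= n%:R * e by rewrite mulr_ge0.
have taA : A <= t a * A by rewrite ler_pMl.
have tbB : B <= t b * B by rewrite ler_pMl.
have e1 : n%:R * (- e * (A + B)) = - ((n%:R * e) * (A + B)) by ring.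
have e2 : (n%:R * e) * (A + B) <= 1 / 2 * (A + B).
  by apply: ler_wpM2r => //; rewrite addr_ge0 // ltW.
rewrite -/A -/B; clearbody A B S; lra.
Qed.

Lemma size_T m (Q : {poly R}) : (size (T m Q) <= size Q)%N.
Proof.
apply/leq_sizeP => j hj; rewrite coef_T.
by rewrite (leq_sizeP _ _ (leqnn _)) ?mulr0.
Qed.

Lemma hornerTT_sum m1 m2 (Q : {poly R}) n (x : R) : (size Q <= n)%N ->
  (T m1 (T m2 Q)).[x] = \sum_(i < n) ((i%:R - m1%:R) * ((i%:R - m2%:R) * Q`_i)) * x ^+ i.
Proof.
move=> hQ; rewrite (@horner_coef_wide _ n); last first.
  by apply: leq_trans (size_T _ _) _; apply: leq_trans (size_T _ _) _.
by apply: eq_bigr => i _; rewrite !coef_T.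
Qed.

Lemma hornerT_sum m (Q : {poly R}) n (x : R) : (size Q <= n)%N ->
  (T m Q).[x] = \sum_(i < n) ((i%:R - m%:R) * Q`_i) * x ^+ i.
Proof.
move=> hQ; rewrite (@horner_coef_wide _ n); last by apply: leq_trans (size_T _ _) _.
by apply: eq_bigr => i _; rewrite !coef_T.
Qed.

Lemma weight_ge0 (i k : nat) : 0 <= (i%:R - k.+1%:R) * (i%:R - k%:R) :> R.
Proof.
case: (leqP i k) => h.
  apply: mulr_le0; rewrite subr_le0 ler_nat //; exact: leqW.
by apply: mulr_ge0; rewrite subr_ge0 ler_nat // ltnW.
Qed.

Lemma weight_le (i k d : nat) : (i <= d)%N -> (k <= d)%N ->
  (i%:R - k.+1%:R) * (i%:R - k%:R) <= (d.+1 ^ 2)%N%:R :> R.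
Proof.
move=> id kd; rewrite natrX -[k.+1]addn1 natrD.
have hi : (i%:R : R) <= d%:R by rewrite ler_nat.
have hk : (k%:R : R) <= d%:R by rewrite ler_nat.
have hi0 : (0 : R) <= i%:R by [].
have hk0 : (0 : R) <= k%:R by [].
rewrite -natr1.
nra.
Qed.


Lemma realizes_of (P : {poly R}) s : defines_pattern P s ->
  (exists r1 r2 b, [/\ 0 < r1, r1 < r2, 0 < b, root P r1 &
   [/\ root P r2, root P (- b),
   (forall x, root P x -> [\/ x = r1, x = r2 | x = - b]) &
   (forall x, root P x -> ~~ root P^`() x)]]) ->
  realizes P s 2 1.
Proof.
move=> hp [r1 [r2 [b [r10 r12 b0 rr1 [rr2 rb hall hsimp]]]]].
have r20 : 0 < r2 by apply: lt_trans r12.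
split => //.
- exists [:: r1; r2]; split => //.
    by rewrite /= inE andbT (lt_eqF r12).
  move=> x; rewrite !inE; split.
    by case/orP => /eqP ->.
  case=> x0 rx; case: (hall x rx) => [->|->|xb]; rewrite ?eqxx ?orbT //.
  by move: x0; rewrite xb oppr_gt0 ltNge (ltW b0).
- exists [:: - b]; split => //.
  move=> x; rewrite !inE; split.
    by move/eqP => ->; rewrite oppr_lt0.
  case=> x0 rx; case: (hall x rx) => [xr|xr|->]; rewrite ?eqxx //.
    by move: x0; rewrite xr ltNge (ltW r10).
  by move: x0; rewrite xr ltNge (ltW r20).
Qed.

Lemma sgnE (j : nat) : (-1) ^+ j = (if odd j then -1 else 1) :> R.
Proof. by rewrite -signr_odd; case: (odd j); rewrite ?expr1 ?expr0. Qed.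

Section Constr.
Variables (d k : nat) (s : seq bool) (q : bool).
Hypothesis hd : odd d.
Hypothesis hs : size s = d.+1.
Hypothesis hmaj : forall j, (j <= d)%N -> (odd j == q) || (j == 0)%N || (j == d) ->
  monomial_sign s j.
Hypothesis hkd : (k <= d)%N.
Hypothesis hk : ~~ monomial_sign s k.
Hypothesis hmax : forall j, (j <= d)%N -> (k < j)%N -> monomial_sign s j.

Definition eps : R := ((2 * d.+1 ^ 3)%N%:R)^-1.
Definition Mb : R := (d.+2)%:R.
Definition cf (j : nat) : R :=
  if (odd j == q) || (j == 0)%N || (j == d) then 1
  else if j == k then - Mb else if monomial_sign s j then eps else - eps.
Definition Pc : {poly R} := \poly_(j < d.+1) cf j.

Lemma eps_gt0 : 0 < eps.
Proof. by rewrite invr_gt0 ltr0n muln_gt0 /= expn_gt0. Qed.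

Lemma Mb_gt0 : 0 < Mb.
Proof. by rewrite ltr0n. Qed.

Lemma kmin : (odd k == q) || (k == 0)%N || (k == d) = false.
Proof. by apply/negbTE; apply: contra hk; apply: hmaj. Qed.

Lemma cfk : cf k = - Mb.
Proof. by rewrite /cf kmin eqxx. Qed.

Lemma eps_le1 : eps <= 1.
Proof.
rewrite /eps invf_le1 ?ltr0n ?muln_gt0 ?expn_gt0 //.
by rewrite ler1n muln_gt0 expn_gt0.
Qed.

Lemma cf_le1 j : cf j <= 1.
Proof.
have e0 := eps_gt0; have M0 := Mb_gt0; have e1 := eps_le1.
by rewrite /cf; case: ifP => _; [lra|]; case: ifP => _; [lra|]; case: ifP => _; lra.
Qed.

Lemma coefPc j : (j < d.+1)%N -> Pc`_j = cf j.
Proof. by move=> hj; rewrite coef_poly hj. Qed.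

Lemma sizePc : size Pc = d.+1.
Proof. by apply: size_poly_eq; rewrite /cf /= eqxx !orbT oner_neq0. Qed.

Lemma lcPc : lead_coef Pc = 1.
Proof. by rewrite lead_coefE sizePc coefPc // /cf eqxx !orbT. Qed.

Lemma patternPc : defines_pattern Pc s.
Proof.
have e0 := eps_gt0; have M0 := Mb_gt0.
split; first by rewrite monicE lcPc.
- by rewrite sizePc hs.
- move=> j; rewrite hs => hj; rewrite coefPc // /cf.
  case: ifP => _; first exact: oner_neq0.
  case: ifP => _; first by rewrite oppr_eq0 gt_eqF.
  by case: ifP => _; rewrite ?oppr_eq0 gt_eqF.
- move=> j; rewrite hs => hj; rewrite coefPc // /cf.
  case: ifP => h1; first by rewrite ltr01 hmaj.
  case: ifP => h2; first by rewrite (eqP h2) oppr_gt0 ltNge (ltW M0) (negbTE hk).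
  by case: ifP => h3; rewrite ?oppr_gt0 ?e0 // ltNge (ltW e0).
Qed.

Lemma Pc0 : 0 < Pc.[0].
Proof. by rewrite horner_coef0 coefPc // /cf eqxx orbT ltr01. Qed.

Lemma Pc1 : Pc.[1] < 0.
Proof.
rewrite horner_poly.
have kd : (k < d.+1)%N by [].
rewrite (bigD1 (Ordinal kd)) //= cfk expr1n mulr1.
set S := \sum_(_ < _ | _) _.
have hS : S <= d.+1%:R.
  apply: le_trans (_ : \sum_(i < d.+1 | i != Ordinal kd) (1 : R) <= _).
    by apply: ler_sum => i _; rewrite expr1n mulr1 cf_le1.
  rewrite big_mkcond /=.
  apply: le_trans (_ : \sum_(i < d.+1) (1 : R) <= _).
    by apply: ler_sum => i _; case: ifP => // _; exact: ler01.
  by rewrite sumr_const card_ord.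
rewrite /Mb; apply: le_lt_trans (_ : - d.+2%:R + d.+1%:R < 0).
  by rewrite lerD2l.
by rewrite addrC subr_lt0 ltr_nat.
Qed.


Lemma cf_cases j : (j <= d)%N ->
  [\/ cf j = 1 /\ ((odd j == q) || (j == 0)%N || (j == d)),
      j = k /\ cf j = - Mb,
      [/\ cf j = eps, (odd j == q) = false, j != 0%N & j != d] |
      [/\ cf j = - eps, (j < k)%N, (odd j == q) = false, j != 0%N & j != d]].
Proof.
move=> jd; rewrite /cf; case: ifP => h1; first by apply: Or41.
case: ifP => h2; first by apply: Or42; rewrite (eqP h2).
move/negbT: h1; rewrite !negb_or => /andP[/andP[h1 h0] h3].
case: ifP => h4.
  by apply: Or43; split => //; apply/negbTE.
apply: Or44; split => //; last by apply/negbTE.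
rewrite ltnNge; apply/negP => kj.
have : (k < j)%N by rewrite ltn_neqAle eq_sym h2 kj.
by move/(hmax j jd); rewrite h4.
Qed.

Definition del : R := eps * (d.+1 ^ 2)%N%:R.

Lemma del_ge0 : 0 <= del.
Proof. by rewrite mulr_ge0 // ltW // eps_gt0. Qed.

Lemma ndel : d.+1%:R * del <= 1 / 2.
Proof.
rewrite /del /eps natrM !natrX.
have X0 : (d.+1%:R : R) != 0 by rewrite pnatr_eq0.
have -> : d.+1%:R * ((2%:R * d.+1%:R ^+ 3)^-1 * d.+1%:R ^+ 2) = 1 / 2 :> R.
  by field; rewrite addrC natr1 pnatr_eq0.
exact: lexx.
Qed.

Lemma Hpos b : (0 < k)%N -> (0 < b)%N -> (b <= d)%N -> cf b = 1 ->
  1 <= (b%:R - k.+1%:R) * (b%:R - k%:R) :> R ->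
  (forall j, (j <= d)%N -> j != b -> cf j = - eps -> (j < b)%N) ->
  forall x, 0 < x -> 0 < (T k.+1 (T k Pc)).[x].
Proof.
move=> k0 b0 bd cfb wb hb x x0.
rewrite (@hornerTT_sum _ _ _ d.+1); last by rewrite sizePc.
rewrite (eq_bigr (fun i : 'I_d.+1 => ((i%:R - k.+1%:R) * ((i%:R - k%:R) * cf i)) * x ^+ i)); last first.
  by move=> i _; rewrite coefPc.
apply: (@dom d.+1 0 b (fun i : nat => (i%:R - k.+1%:R) * ((i%:R - k%:R) * cf i)) del) => //.
- by rewrite b0 ltnS.
- exact: del_ge0.
- rewrite /cf /= eqxx orbT mulr1 sub0r sub0r mulrNN.
  have : (1 : R) <= k%:R by rewrite ler1n.
  rewrite -natr1; nra.
- by rewrite cfb mulr1.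
- exact: ndel.
move=> j jn j0 jb; have jd : (j <= d)%N by [].
have w0 := weight_ge0 j k; have wle := @weight_le j k d jd hkd.
have e0 := eps_gt0.
case: (cf_cases j jd) => [[-> _]|[-> _]|[-> _ _ _]|[ce _ _ _ _]].
- by left; rewrite mulr1.
- by left; rewrite subrr mul0r mulr0.
- by left; rewrite mulrA mulr_ge0 // ltW.
right; split; first by rewrite lt0n j0 (hb j jd jb ce).
rewrite ce mulrA /del mulrN mulrC lerN2.
by apply: ler_wpM2r => //; apply: ltW.
Qed.

Lemma Nneg m a b : (m <= d)%N -> (a < b)%N -> (b <= d)%N ->
  1 <= - (((a%:R - m%:R) * cf a) * (-1) ^+ a) ->
  1 <= - (((b%:R - m%:R) * cf b) * (-1) ^+ b) ->
  (forall j, (j <= d)%N -> j != a -> j != b ->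
     0 <= - (((j%:R - m%:R) * cf j) * (-1) ^+ j) \/
     ((a < j < b)%N /\ - del <= - (((j%:R - m%:R) * cf j) * (-1) ^+ j))) ->
  forall y, 0 < y -> (T m Pc).[- y] < 0.
Proof.
move=> md ab bd ha hb hj y y0.
rewrite (@hornerT_sum _ _ d.+1); last by rewrite sizePc.
rewrite (eq_bigr (fun i : 'I_d.+1 => - (- (((i%:R - m%:R) * cf i) * (-1) ^+ i) * y ^+ i))); last first.
  by move=> i _; rewrite coefPc // [(- y) ^+ _]exprNn mulNr opprK !mulrA.
rewrite sumrN oppr_lt0.
apply: (@dom d.+1 a b (fun i : nat => - (((i%:R - m%:R) * cf i) * (-1) ^+ i)) del) => //.
- by rewrite ab ltnS.
- exact: del_ge0.
- exact: ndel.
Qed.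


Lemma cf_negeps j : (j <= d)%N -> cf j = - eps -> (j < k)%N.
Proof.
move=> jd ce; have e0 := eps_gt0; have M0 := Mb_gt0; have e1 := eps_le1.
case: (cf_cases j jd) => [[c _]|[_ c]|[c _ _ _]|[_ -> _ _ _]] //; exfalso.
- by move: ce; rewrite c => h; have : (1 : R) = - eps by []; lra.
- move: ce; rewrite c => /eqP; rewrite eqr_opp => /eqP h.
  have : (2 : R) <= Mb by rewrite /Mb ler_nat.
  lra.
- by move: ce; rewrite c => h; lra.
Qed.

Lemma case3 : q = true -> exists P : {poly R}, realizes P s 2 1.
Proof.
move=> hq.
have := kmin; rewrite hq => /negbT; rewrite !negb_or => /andP[/andP[kev k0] kd].
have kev' : ~~ odd k by move: kev; case: (odd k).
have k2 : (2 <= k)%N by move: k0 kev'; case: k => [|[|]].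
have kd' : (k < d)%N by rewrite ltn_neqAle kd hkd.
have d3 : (2 < d)%N by apply: leq_trans kd'.
have e0 := eps_gt0; have M0 := Mb_gt0.
exists Pc; apply: realizes_of; first exact: patternPc.
apply: (@count Pc k 0); rewrite ?lcPc ?sizePc //.
- exact: Pc0.
- exact: Pc1.
- apply: (@Hpos k.-1); first by apply: leq_trans k2.
  + by rewrite -ltnS prednK // ltnW.
  + by apply: leq_trans (leq_pred _) hkd.
  + by rewrite /cf hq -(prednK (ltnW k2)) /= in kev' *; rewrite negbK in kev'; rewrite kev'.
  + rewrite -(prednK (ltnW k2)) /= -!natr1; lra.
  + move=> j jd jk ce; have := cf_negeps j jd ce.
    by rewrite -{1}(prednK (ltnW k2)) ltnS leq_eqVlt (negbTE jk).
- apply: (@Nneg 0 1 d) => //; first exact: ltnW.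
  + by rewrite /cf hq /= subr0 mulr1 expr1 mulrN1 opprK.
  + by rewrite /cf eqxx !orbT subr0 mulr1 sgnE hd mulrN1 opprK ler1n; apply: leq_trans d3.
  move=> j jd j1 jdd.
  have hj : (j%:R : R) <= d%:R by rewrite ler_nat.
  rewrite subr0 sgnE.
  case: (cf_cases j jd) => [[-> hm]|[-> ->]|[-> ho j0 _]|[-> _ ho _ _]].
  + left; move: hm; rewrite hq (negbTE jdd) orbF; case: (odd j) => /= hm.
      by rewrite mulr1 mulrN1 opprK.
    by rewrite (eqP hm) mul0r mulr1 oppr0.
  + left; rewrite (negbTE kev') mulr1 mulrN opprK; apply: mulr_ge0 => //; exact: ltW.
  + right; have ho' : odd j = false by move: ho; rewrite hq; case: (odd j).
    rewrite ho' mulr1.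
    split.
      have j2 : (1 < j)%N by move: j0 j1; case: j {jd hj jdd ho ho'} => [|[|]].
      by rewrite j2 ltn_neqAle jdd jd.
    rewrite lerN2 /del mulrC; apply: ler_wpM2l; first exact: ltW.
    rewrite ler_nat; apply: (leq_trans jd); apply: (leq_trans (leqnSn d)).
    by rewrite expnS expn1 leq_pmulr.
  + left; have ho' : odd j = false by move: ho; rewrite hq; case: (odd j).
    rewrite ho' mulr1 mulrN opprK.
    by rewrite mulr_ge0 // ltW.
Qed.


Lemma case4 : q = false -> exists P : {poly R}, realizes P s 2 1.
Proof.
move=> hq.
have := kmin; rewrite hq => /negbT; rewrite !negb_or => /andP[/andP[kod k0] kd].
have kod' : odd k by move: kod; case: (odd k).
have kd' : (k < d)%N by rewrite ltn_neqAle kd hkd.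
have kd2 : (k.+2 <= d)%N.
  rewrite ltn_neqAle kd' andbT; apply/negP => /eqP e.
  by move: hd; rewrite -e /= kod'.
have k1 : (0 < k)%N by move: kod'; case: k.
have d3 : (2 < d)%N by apply: leq_trans kd2; rewrite !ltnS.
have e0 := eps_gt0; have M0 := Mb_gt0.
have dd : d = d.-1.+1 by rewrite prednK // ltnW // ltnW.
have hd1 : odd d.-1 = false by move: hd; rewrite {1}dd /=; case: (odd d.-1).
exists Pc; apply: realizes_of; first exact: patternPc.
apply: (@count Pc k d); rewrite ?lcPc ?sizePc //.
- exact: Pc0.
- exact: Pc1.
- apply: (@Hpos d) => //; first by apply: leq_trans d3.
  + by rewrite /cf eqxx !orbT.
  + have : (k.+2%:R : R) <= d%:R by rewrite ler_nat.
    rewrite -!natr1 => h; nra.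
  + move=> j jd _ ce; have := cf_negeps j jd ce => jk.
    exact: ltn_trans jk kd'.
- apply: (@Nneg d 0 d.-1) => //.
  + by rewrite -ltnS -dd ltnW // ltnW.
  + exact: leq_pred.
  + rewrite /cf eqxx orbT expr0 !mulr1 sub0r opprK ler1n.
    by apply: leq_trans d3.
  + rewrite /cf hq hd1 /= mulr1 sgnE hd1 mulr1.
    have -> : (d.-1%:R - d%:R : R) = -1 by rewrite {2}dd -natr1; ring.
    by rewrite opprK.
  move=> j jd j0 jdd.
  have hj : (j%:R : R) <= d%:R by rewrite ler_nat.
  rewrite sgnE.
  case: (cf_cases j jd) => [[-> hm]|[-> ->]|[-> ho _ jnd]|[-> _ ho _ _]].
  + left; move: hm; rewrite hq; case: (boolP (odd j)) => /= hoj hm.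
      by move: hm; rewrite (negbTE j0) /= => /eqP ->; rewrite subrr !mul0r oppr0.
    by rewrite !mulr1 oppr_ge0 subr_le0.
  + left; rewrite kod' mulrN1 !mulrN opprK mulrC -mulrN.
    by apply: mulr_ge0; [exact: ltW|rewrite oppr_ge0 subr_le0 ler_nat].
  + right; have ho' : odd j = true by move: ho; rewrite hq; case: (odd j).
    rewrite ho' mulrN1 opprK.
    split.
      rewrite lt0n j0 /= ltn_neqAle jdd /=.
      rewrite -ltnS -dd ltn_neqAle jd andbT.
      exact: jnd.
    rewrite /del [_ * eps]mulrC -mulrN; apply: ler_wpM2l; first exact: ltW.
    have : (0 : R) <= j%:R by [].
    have : (d%:R : R) <= (d.+1 ^ 2)%N%:R.
      rewrite ler_nat; apply: (leq_trans (leqnSn d)).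
      by rewrite expnS expn1 leq_pmulr.
    lra.
  + left; have ho' : odd j = true by move: ho; rewrite hq; case: (odd j).
    rewrite ho' mulrN1 opprK mulrN oppr_ge0.
    by apply: mulr_le0_ge0; [rewrite subr_le0 ler_nat|exact: ltW].
Qed.

End Constr.

Lemma neg_unique (P : {poly R}) s : realizes P s 2 1 ->
  forall x y, x < 0 -> y < 0 -> root P x -> root P y -> x = y.
Proof.
case=> _ _ [rs [_ hsz hrs]] _ x y x0 y0 rx ry.
have hx : x \in rs by apply/hrs.
have hy : y \in rs by apply/hrs.
move: hsz hx hy; case: rs {hrs} => [|w r] //=; case: r => [|w' r] //= _.
by rewrite !inE => /eqP -> /eqP ->.
Qed.

Lemma ord3 (P : {poly R}) beta a1 :
  (forall x, 0 < x -> P.[- x] < P.[x]) -> 0 < P.[0] ->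
  (forall x y, x < 0 -> y < 0 -> root P x -> root P y -> x = y) ->
  0 < beta -> root P (- beta) -> 0 < a1 -> root P a1 -> beta < a1.
Proof.
move=> hodd P0 hu b0 rb a0 ra.
rewrite ltNge; apply/negP => ab.
have hn : P.[- a1] < 0 by have := hodd a1 a0; rewrite (eqP ra).
case: (ltgtP a1 beta) => [ab'|ba|e]; last first.
- by move: hn; rewrite e (eqP rb) ltxx.
- by move: ab; rewrite leNgt ba.
have h0 : P.[- a1] * P.[0] < 0 by rewrite nmulr_rlt0.
have a0' : - a1 <= 0 by rewrite oppr_le0 ltW.
have [z zi rz] := @poly_ivtoo _ P (- a1) 0 a0' h0.
move: zi; rewrite in_itv /= => /andP[az z0].
have bz : - beta < 0 by rewrite oppr_lt0.
have := hu z (- beta) z0 bz rz rb => e.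
by move: az; rewrite e ltrN2 ltNge (ltW ab').
Qed.

Lemma ord4 (P : {poly R}) beta a2 : lead_coef P = 1 -> odd (size P).-1 ->
  (forall x, 0 < P.[x] + P.[- x]) ->
  (forall x y, x < 0 -> y < 0 -> root P x -> root P y -> x = y) ->
  0 < beta -> root P (- beta) -> 0 < a2 -> root P a2 -> a2 < beta.
Proof.
move=> lc od hev hu b0 rb a0 ra.
rewrite ltNge; apply/negP => ba.
have hp : 0 < P.[- a2] by have := hev a2; rewrite (eqP ra) add0r.
case: (ltgtP a2 beta) => [ab|ba'|e].
- by move: ba; rewrite leNgt ab.
- have [y [ya py]] := far_neg P (- a2) lc od.
  have h0 : P.[y] * P.[- a2] < 0 by rewrite nmulr_rlt0.
  have [z zi rz] := @poly_ivtoo _ P y (- a2) (ltW ya) h0.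
  move: zi; rewrite in_itv /= => /andP[yz za].
  have z0 : z < 0 by rewrite (lt_trans za) // oppr_lt0.
  have bz : - beta < 0 by rewrite oppr_lt0.
  have := hu z (- beta) z0 bz rz rb => e.
  by move: za; rewrite e ltrN2 ltNge (ltW ba').
- by move: hp; rewrite e (eqP rb) ltxx.
Qed.

Lemma oddpart (P : {poly R}) : (forall i, (i < size P)%N -> odd i -> 0 < P`_i) ->
  (1 < size P)%N -> forall x, 0 < x -> P.[- x] < P.[x].
Proof.
move=> hp s1 x x0; rewrite -subr_gt0 !horner_coef -sumrB.
rewrite (bigD1 (Ordinal s1)) //=.
have h1 : 0 < P`_1 * x ^+ 1 - P`_1 * (- x) ^+ 1.
  rewrite !expr1 mulrN opprK -mulr2n mulrn_wgt0 //.
  by apply: mulr_gt0 => //; exact: hp.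
apply: (lt_le_trans h1); rewrite lerDl; apply: sumr_ge0 => i _.
rewrite exprNn sgnE; case: ifP => oi.
  rewrite mulN1r mulrN opprK -mulr2n mulrn_wge0 // mulr_ge0 // ?exprn_ge0 ?ltW //.
  exact: hp.
by rewrite mul1r subrr.
Qed.

Lemma evenpart (P : {poly R}) : (forall i, (i < size P)%N -> ~~ odd i -> 0 < P`_i) ->
  (0 < size P)%N -> forall x, 0 < P.[x] + P.[- x].
Proof.
move=> hp s1 x; rewrite !horner_coef -big_split /=.
rewrite (bigD1 (Ordinal s1)) //=.
have h1 : 0 < P`_0 * x ^+ 0 + P`_0 * (- x) ^+ 0.
  by rewrite !expr0 !mulr1 addr_gt0 // hp.
apply: (lt_le_trans h1); rewrite lerDl; apply: sumr_ge0 => i _.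
rewrite exprNn sgnE; case: ifP => oi.
  by rewrite mulN1r mulrN subrr.
rewrite mul1r -mulr2n mulrn_wge0 // mulr_ge0 // ?exprn_even_ge0 ?oi //.
by apply: ltW; apply: hp; rewrite ?oi.
Qed.

End S.

Lemma parity_changes (f : nat -> bool) n :
  odd (\sum_(i < n) (f i != f i.+1)) = (f 0 != f n).
Proof.
elim: n => [|n IH]; first by rewrite big_ord0 /=; case: (f 0).
rewrite big_ord_recr /= oddD IH oddb.
by case: (f 0); case: (f n); case: (f n.+1).
Qed.

Theorem theorem4 (R : realType) (d : nat) (s : seq bool) :
  odd d -> sign_pattern d s -> compatible s 2 1 ->
  ((forall j, (j <= d)%N -> odd j -> monomial_sign s j) ->
     (exists P : {poly R}, realizes P s 2 1) /\
     (forall (P : {poly R}) (beta a1 a2 : R), realizes P s 2 1 ->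
        0 < beta -> root P (- beta) -> 0 < a1 -> a1 < a2 ->
        root P a1 -> root P a2 -> beta < a1 /\ a1 < a2)) /\
  ((forall j, (j <= d)%N -> ~~ odd j -> monomial_sign s j) ->
     (exists P : {poly R}, realizes P s 2 1) /\
     (forall (P : {poly R}) (beta a1 a2 : R), realizes P s 2 1 ->
        0 < beta -> root P (- beta) -> 0 < a1 -> a1 < a2 ->
        root P a1 -> root P a2 -> a1 < a2 /\ a2 < beta)).
Proof.
move=> hd /andP[/eqP hs s0] hc.
have msE : forall j, monomial_sign s j = nth false s (d - j).
  by move=> j; rewrite /monomial_sign hs.
have msd : monomial_sign s d by rewrite msE subnn.
move: hc; rewrite /compatible => /and4P[c2 codd _ _].
have cE : sign_changes s = (\sum_(i < d) (nth false s i != nth false s i.+1))%N.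
  by rewrite /sign_changes hs.
have hpar : nth false s d = nth false s 0.
  move: codd; rewrite oddB // /= addbF cE parity_changes.
  by case: (nth false s 0); case: (nth false s d).
have hex : exists i, (i <= d)%N && ~~ monomial_sign s i.
  case: (boolP [exists i : 'I_d.+1, ~~ monomial_sign s i]) => [/existsP [i hi]|hall].
    by exists i; rewrite hi andbT -ltnS ltn_ord.
  have hall' : forall i, (i <= d)%N -> nth false s i.
    move=> i id; have dl : (d - i < d.+1)%N by rewrite ltnS leq_subr.
    move/existsPn: hall => /(_ (Ordinal dl)) /=; rewrite negbK msE subKn //.
  move: c2; rewrite cE big1 // => i _.
  have id : (i < d)%N := ltn_ord i.
  by rewrite (hall' i (ltnW id)) (hall' i.+1 id).
have hb : forall i, (i <= d)%N && ~~ monomial_sign s i -> (i <= d)%N.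
  by move=> i /andP[].
case: (ex_maxnP hex hb) => k /andP[kd hk] kmax.
have hmax : forall j, (j <= d)%N -> (k < j)%N -> monomial_sign s j.
  move=> j jd kj; apply/negPn/negP => h.
  by have := kmax j; rewrite jd h => /(_ isT); rewrite leqNgt kj.
split.
  move=> hodd.
  have ms0 : monomial_sign s 0 by rewrite msE subn0 hpar.
  split.
    apply: (@case3 R d k s true hd hs _ kd hk hmax erefl).
    move=> j jd /orP[/orP[|/eqP ->]|/eqP ->] //.
    by rewrite eqb_id; apply: hodd.
  move=> P beta a1 a2 hr b0 rb a0 a12 ra1 ra2; split => //.
  have [[_ sP _ sgn] _ _ _] := hr.
  apply: (@ord3 R P) => //.
  - apply: oddpart; last by rewrite sP hs ltnS lt0n; apply: contraTneq hd => ->.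
    move=> i; rewrite sP => il oi; rewrite sgn //; apply: hodd => //.
    by rewrite -ltnS -hs.
  - by rewrite horner_coef0 sgn ?hs.
  - exact: neg_unique hr.
move=> hev.
split.
  apply: (@case4 R d k s false hd hs _ kd hk hmax erefl).
  move=> j jd /orP[/orP[|/eqP ->]|/eqP ->] //.
  - by rewrite eqbF_neg; apply: hev.
  - by apply: hev.
move=> P beta a1 a2 hr b0 rb a0 a12 ra1 ra2; split => //.
have [[mP sP _ sgn] _ _ _] := hr.
apply: (@ord4 R P) => //.
- by move: mP; rewrite monicE => /eqP.
- by rewrite sP hs.
- apply: evenpart; last by rewrite sP hs.
  move=> i; rewrite sP => il oi; rewrite sgn //; apply: hev => //.
  by rewrite -ltnS -hs.
- exact: neg_unique hr.
- exact: lt_trans a12.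
Qed.
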